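(* Let $\mathcal{G}$ be a directed graph consisting of a single cycle over $k+1$ nodes indexed $0,1,\dots,k$, with edges $\ell_1,\dots,\ell_{k+1}$ where $\ell_i$ joins nodes $i-1$ and $i$ for $i=1,\dots,k$ and $\ell_{k+1}$ joins nodes $k$ and $0$ (each edge carries an arbitrary orientation). Each edge is either a lossy pipe $\ell=(m,n)$ with parameter $a_\ell>0$, or a compressor $\ell=(m,n)$ with ratio $\alpha_\ell>0$; assume at least one edge is a lossy pipe. Let $\mathbf{n}\in\{\pm1\}^{k+1}$ be the cycle indicator vector for the cycle direction $0\to1\to\dots\to k\to 0$: $n_i=+1$ if the orientation of $\ell_i$ agrees with this direction and $n_i=-1$ otherwise. Say a pair $(\boldsymbol{\phi},\boldsymbol{\psi})\in\mathbb{R}^{k+1}\times\mathbb{R}^{k+1}$ is admissible if $\psi_m-\psi_n=a_\ell\,\mathrm{sign}(\phi_\ell)\phi_\ell^2$ for every lossy pipe $\ell=(m,n)$, $\psi_j\ge 0$ for every node $j$, and $\psi_n=\alpha_\ell\psi_m$, $\phi_\ell\ge0$ for every compressor $\ell=(m,n)$. Suppose $(\boldsymbol{\phi},\boldsymbol{\psi})$ and $(\tilde{\boldsymbol{\phi}},\tilde{\boldsymbol{\psi}})$ are admissible with $\psi_0=\tilde{\psi}_0$ and $\tilde{\boldsymbol{\phi}}\neq\boldsymbol{\phi}$. Then it is neither the case that $\mathrm{sign}(\tilde{\boldsymbol{\phi}}-\boldsymbol{\phi})\odot\mathbf{n}<\mathbf{0}$ entrywise, nor the case that $\mathrm{sign}(\tilde{\boldsymbol{\phi}}-\boldsymbol{\phi})\odot\mathbf{n}>\mathbf{0}$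 entrywise.
   Context: $\mathrm{sign}$ is applied entrywise, with $\mathrm{sign}(x)=+1$ for $x>0$, $-1$ for $x<0$, $0$ for $x=0$; $\odot$ denotes entrywise product of vectors. *)

(* Defs.v *)
From mathcomp Require Import all_boot all_order all_algebra.
From mathcomp Require Import reals.
Set Implicit Arguments. Unset Strict Implicit. Unset Printing Implicit Defensive.
Import Order.TTheory GRing.Theory Num.Theory.
Local Open Scope ring_scope.

(* Cycle graph on k+1 nodes 'I_k.+1.  Edges are also indexed by 'I_k.+1:
   edge l (0-based; this is the paper's edge ell_{l+1}) joins node l and node
   ordS l = (l+1) mod (k+1); so edge k joins node k and node 0.
   [orient l = true] means edge l is oriented l -> l+1 (agrees with the cycle
   direction 0 -> 1 -> ... -> k -> 0), otherwise it is oriented l+1 -> l. *)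

Definition etail (k : nat) (orient : 'I_k.+1 -> bool) (l : 'I_k.+1) : 'I_k.+1 :=
  if orient l then l else ordS l.
Definition ehead (k : nat) (orient : 'I_k.+1 -> bool) (l : 'I_k.+1) : 'I_k.+1 :=
  if orient l then ordS l else l.

Definition cycle_ind (R : numDomainType) (k : nat) (orient : 'I_k.+1 -> bool)
  (l : 'I_k.+1) : R := if orient l then 1 else -1.

(* [comp l = true]: edge l is a compressor with ratio c l;
   otherwise edge l is a lossy pipe with parameter c l.
   Edge l = (m, n) with m = etail l, n = ehead l. *)
Definition admissible (R : realType) (k : nat) (comp orient : 'I_k.+1 -> bool)
  (c : 'I_k.+1 -> R) (phi psi : 'rV[R]_k.+1) : Prop :=
  [/\ (forall l, ~~ comp l ->
         psi 0 (etail orient l) - psi 0 (ehead orient l)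
           = c l * Num.sg (phi 0 l) * phi 0 l ^+ 2),
      (forall j, 0 <= psi 0 j) &
      (forall l, comp l ->
         psi 0 (ehead orient l) = c l * psi 0 (etail orient l) /\ 0 <= phi 0 l)].

(* Main.v *)
Require Import Defs.
From mathcomp Require Import all_boot all_order all_algebra.
From mathcomp Require Import reals.
From mathcomp Require Import lra zify.
Import Order.TTheory GRing.Theory Num.Theory.
Local Open Scope ring_scope.

Lemma g_mono (R : realType) (x y : R) : x < y ->
  Num.sg x * x ^+ 2 < Num.sg y * y ^+ 2.
Proof.
move=> xy.
case: (sgrP x) => Hx; case: (sgrP y) => Hy; rewrite ?Hx ?Hy ?mul0r ?mul1r ?mulN1r;
  try nra; try lra.
Qed.

Lemma key (R : realType) (k : nat) (comp orient : 'I_k.+1 -> bool)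
  (c : 'I_k.+1 -> R) (phi psi phit psit : 'rV[R]_k.+1) :
  (forall l, 0 < c l) ->
  (exists l, ~~ comp l) ->
  admissible comp orient c phi psi ->
  admissible comp orient c phit psit ->
  psi 0 0 = psit 0 0 ->
  ~ (forall l, Num.sg (phit 0 l - phi 0 l) * cycle_ind R orient l < 0).
Proof.
move=> cpos [l0 Hl0] [P1 _ C1] [P2 _ C2] E0 Hs.
set D := fun j => psit 0 j - psi 0 j.
have step : forall l : 'I_k.+1,
  [/\ (0 <= D l -> 0 <= D (ordS l)), (0 < D l -> 0 < D (ordS l)) &
      (~~ comp l -> 0 <= D l -> 0 < D (ordS l))].
  move=> l; have cl := cpos l; have := Hs l; rewrite /cycle_ind /D.
  case Hc: (comp l).
    have [h1 _] := C1 l Hc; have [h2 _] := C2 l Hc.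
    move: h1 h2; rewrite /ehead /etail; case: (orient l) => h1 h2 _.
      rewrite h1 h2 -mulrBr; split => [H|H|//].
      - exact: mulr_ge0 (ltW cl) H.
      - exact: mulr_gt0 cl H.
    have EE : psit 0 l - psi 0 l = c l * (psit 0 (ordS l) - psi 0 (ordS l)).
      by rewrite mulrBr -h1 -h2.
    rewrite EE; split => [H|H|//].
    - by rewrite (pmulr_rge0 _ cl) in H.
    - by rewrite (pmulr_rgt0 _ cl) in H.
  have h1 := P1 l (negbT Hc); have h2 := P2 l (negbT Hc).
  move: h1 h2; rewrite /ehead /etail; case: (orient l) => h1 h2 Hsg.
    have lt : phit 0 l < phi 0 l.
      rewrite mulr1 in Hsg; by rewrite -subr_lt0 -sgr_lt0.
    have gm := g_mono _ _ _ lt.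
    have : c l * Num.sg (phit 0 l) * phit 0 l ^+ 2 <
           c l * Num.sg (phi 0 l) * phi 0 l ^+ 2.
      by rewrite -!mulrA ltr_pM2l.
    rewrite -h1 -h2 => ineq.
    have gt : psit 0 l - psi 0 l < psit 0 (ordS l) - psi 0 (ordS l) by lra.
    split => H; lra.
  have lt : phi 0 l < phit 0 l.
    rewrite mulrN1 oppr_lt0 in Hsg; by rewrite -subr_gt0 -sgr_gt0.
  have gm := g_mono _ _ _ lt.
  have : c l * Num.sg (phi 0 l) * phi 0 l ^+ 2 <
         c l * Num.sg (phit 0 l) * phit 0 l ^+ 2.
    by rewrite -!mulrA ltr_pM2l.
  rewrite -h1 -h2 => ineq.
  have gt : psit 0 l - psi 0 l < psit 0 (ordS l) - psi 0 (ordS l) by lra.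
  split => H; lra.
have claim : forall i, (i <= k)%N -> 0 <= D (inord i) /\
   ((exists l : 'I_k.+1, (l < i)%N && ~~ comp l) -> 0 < D (inord i)).
  elim => [|i IH] Hi.
    have -> : (inord 0 : 'I_k.+1) = 0 by apply: val_inj; rewrite /= inordK.
    rewrite /D E0 subrr; split => // -[l /andP[]]; by rewrite ltn0.
  have [IH1 IH2] := IH (ltnW Hi).
  have -> : (inord i.+1 : 'I_k.+1) = ordS (inord i).
    apply: val_inj; rewrite /= !inordK ?modn_small //; lia.
  have [s1 s2 s3] := step (inord i).
  split; first exact: s1.
  move=> [l /andP[lt pl]].
  rewrite ltnS leq_eqVlt in lt; case/orP: lt => lt.
    have Ei : (inord i : 'I_k.+1) = l by apply: val_inj; rewrite /= inordK ?(eqP lt) //; lia.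
    rewrite Ei in s3 IH1 *; by apply: s3.
  apply: s2; apply: IH2; exists l; by rewrite lt.
have [c1 c2] := claim k (leqnn k).
have [s1 s2 s3] := step (inord k).
have E : ordS (inord k : 'I_k.+1) = 0.
  apply: val_inj; rewrite /= inordK // modnn //.
have D0 : D 0 = 0 by rewrite /D E0 subrr.
have l0k : (l0 <= k)%N by rewrite -ltnS.
rewrite leq_eqVlt in l0k; case/orP: l0k => lk.
  have Hi : (inord k : 'I_k.+1) = l0 by apply: val_inj; rewrite /= inordK ?(eqP lk).
  have := s3; rewrite Hi Hl0 => /(_ isT); rewrite -Hi E D0 => /(_ c1).
  by rewrite ltxx.
have := s2 (c2 (ex_intro _ l0 (introT andP (conj lk Hl0)))).
by rewrite E D0 ltxx.
Qed.

Theorem lemma2 (R : realType) (k : nat) (comp orient : 'I_k.+1 -> bool)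
  (c : 'I_k.+1 -> R) (phi psi phit psit : 'rV[R]_k.+1) :
  (forall l, 0 < c l) ->
  (exists l, ~~ comp l) ->
  admissible comp orient c phi psi ->
  admissible comp orient c phit psit ->
  psi 0 0 = psit 0 0 ->
  phit <> phi ->
  ~ (forall l, Num.sg (phit 0 l - phi 0 l) * cycle_ind R orient l < 0) /\
  ~ (forall l, Num.sg (phit 0 l - phi 0 l) * cycle_ind R orient l > 0).
Proof.
move=> cp ex A1 A2 E _; split; first exact: key cp ex A1 A2 E.
move=> H; apply: (@key R k comp orient c phit psit phi psi cp ex A2 A1 (esym E)) => l.
by rewrite -opprB sgrN mulNr oppr_lt0 H.
Qed.
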